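(* Fix integers $\delta,r,t$ with $0\le\delta\le d$ and $0\le r,t\le d-\delta$. Let $(A;\{E_i\}_{i=0}^\delta;A^*;\{E^*_i\}_{i=0}^\delta)$ be a tridiagonal system over $\mathbb{F}$ on a vector space $V$, with eigenvalue sequence $\theta_t,\theta_{t+1},\dots,\theta_{t+\delta}$ and dual eigenvalue sequence $\theta^*_r,\theta^*_{r+1},\dots,\theta^*_{r+\delta}$. Then there exists a $T$-module structure on $V$ such that (i) $a$ acts as $A$ and $a^*$ acts as $A^*$; (ii) for $0\le i\le d$, $e_i$ acts as $E_{i-t}$ if $t\le i\le t+\delta$ and as $0$ otherwise; (iii) for $0\le i\le d$, $e^*_i$ acts as $E^*_{i-r}$ if $r\le i\le r+\delta$ and as $0$ otherwise. This $T$-module is irreducible.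
   Context: $\mathbb{F}$ is a field, $d\ge0$, and $\{\theta_i\}_{i=0}^d$, $\{\theta^*_i\}_{i=0}^d$ are scalars in $\mathbb{F}$ with $\theta_i\ne\theta_j$, $\theta^*_i\ne\theta^*_j$ for $i\ne j$, such that $\frac{\theta_{i-2}-\theta_{i+1}}{\theta_{i-1}-\theta_i}$ and $\frac{\theta^*_{i-2}-\theta^*_{i+1}}{\theta^*_{i-1}-\theta^*_i}$ are equal and independent of $i$ for $2\le i\le d-1$. $T$ is the associative $\mathbb{F}$-algebra with $1$ generated by $a,e_0,\dots,e_d,a^*,e^*_0,\dots,e^*_d$ with relations $e_ie_j=\delta_{ij}e_i$, $e^*_ie^*_j=\delta_{ij}e^*_i$, $\sum_ie_i=\sum_ie^*_i=1$, $a=\sum_i\theta_ie_i$, $a^*=\sum_i\theta^*_ie^*_i$, and $e^*_ia^ke^*_j=0$, $e_i{a^*}^ke_j=0$ whenever $0\le i,j,k\le d$ and $k<|i-j|$. Tridiagonal pair on a finite-dimensional nonzero space $V$: diagonalizable linear maps $A,A^*$ such that some ordering $V_0,\dots,V_\delta$ of the eigenspaces of $A$ satisfies $A^*V_i\subseteq V_{i-1}+V_i+V_{i+1}$, some ordering $V^*_0,\dots,V^*_\delta$ of the eigenspaces of $A^*$ satisfies $AV^*_i\subseteq V^*_{i-1}+V^*_i+V^*_{i+1}$ (out-of-range terms zero), and no subspace $W\ne0,V$ is invariant under both (such orderings are standard). A tridiagonal system $(A;\{E_i\}_{i=0}^\delta;A^*;\{E^*_i\}_{i=0}^\delta)$ is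 a tridiagonal pair with standard orderings of the primitive idempotents of $A$ and $A^*$; its eigenvalue sequence lists the eigenvalue of $A$ on $E_iV$, and its dual eigenvalue sequence the eigenvalue of $A^*$ on $E^*_iV$. *)

(* Defs.v *)
(* Finite-dimensional vector space V = F^n, modelled as row
   vectors 'rV[F]_n; linear maps are n x n matrices acting on the right
   (v |-> v *m M). *)
From HB Require Import structures.
From mathcomp Require Import all_boot all_order all_algebra.
Set Implicit Arguments. Unset Strict Implicit. Unset Printing Implicit Defensive.
Import Order.TTheory GRing.Theory Num.Theory.
Local Open Scope ring_scope.

Section Defs.
Variables (F : fieldType) (n : nat).

Definition distinct_upto (d : nat) (th : nat -> F) :=
  forall i j, (i <= d)%N -> (j <= d)%N -> i != j -> th i != th j.

Definition scalars_ok (d : nat) (th ths : nat -> F) :=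
  [/\ distinct_upto d th, distinct_upto d ths &
      exists beta : F, forall i, (2 <= i)%N -> (i <= d.-1)%N ->
        (th (i - 2)%N - th i.+1) / (th i.-1 - th i) = beta /\
        (ths (i - 2)%N - ths i.+1) / (ths i.-1 - ths i) = beta].

(* E_0..E_delta is the sequence of primitive idempotents of A with
   eigenvalue sequence th_0..th_delta: A is diagonalizable with exactly the
   (distinct) eigenvalues th_0..th_delta, i.e. V is the (necessarily direct)
   sum of the nonzero eigenspaces V_j, and E_i is the projection onto V_i
   along the other V_j (it is the identity on V_i and kills V_j, j <> i). *)
Definition prim_idems (delta : nat) (A : 'M[F]_n) (E : nat -> 'M[F]_n)
    (th : nat -> F) :=
  [/\ distinct_upto delta th,
      forall i, (i <= delta)%N -> eigenvalue A (th i),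
      (\sum_(0 <= j < delta.+1) eigenspace A (th j) == 1%:M)%MS &
      forall i j, (i <= delta)%N -> (j <= delta)%N ->
        eigenspace A (th j) *m E i =
          if i == j then eigenspace A (th j) else 0].

(* Tridiagonal system (A; {E_i}; A*; {E*_i}) with eigenvalue sequence th and
   dual eigenvalue sequence ths.  E_i V is the row space of E_i. *)
Definition TD_system (delta : nat) (A : 'M[F]_n) (E : nat -> 'M[F]_n)
    (As : 'M[F]_n) (Es : nat -> 'M[F]_n) (th ths : nat -> F) :=
  [/\ (0 < n)%N,
      prim_idems delta A E th /\ prim_idems delta As Es ths,
      forall i, (i <= delta)%N ->
        (E i *m As <= \sum_(0 <= j < delta.+1 | (i <= j.+1)%N && (j <= i.+1)%N) E j)%MS,
      forall i, (i <= delta)%N ->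
        (Es i *m A <= \sum_(0 <= j < delta.+1 | (i <= j.+1)%N && (j <= i.+1)%N) Es j)%MS &
      forall W : 'M[F]_n, (W *m A <= W)%MS -> (W *m As <= W)%MS ->
        (W == (0 : 'M[F]_n))%MS || (W == 1%:M)%MS].

(* A T-module structure on V (T = T(d, th, ths) given by generators and
   relations): images ta, te_i, tas, tes_i of the generators
   a, e_i, a*, e*_i satisfying the defining relations of T. *)
Definition T_module (d : nat) (th ths : nat -> F)
    (ta : 'M[F]_n) (te : nat -> 'M[F]_n) (tas : 'M[F]_n) (tes : nat -> 'M[F]_n) :=
  [/\ (forall i j, (i <= d)%N -> (j <= d)%N ->
        te i *m te j = if i == j then te i else 0) /\
      (forall i j, (i <= d)%N -> (j <= d)%N ->
        tes i *m tes j = if i == j then tes i else 0),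
      \sum_(0 <= i < d.+1) te i = 1%:M /\ \sum_(0 <= i < d.+1) tes i = 1%:M,
      ta = \sum_(0 <= i < d.+1) th i *: te i /\
      tas = \sum_(0 <= i < d.+1) ths i *: tes i,
      (forall i j k, (i <= d)%N -> (j <= d)%N -> (k <= d)%N ->
        (k < maxn i j - minn i j)%N -> tes i *m ta ^+ k *m tes j = 0) &
      (forall i j k, (i <= d)%N -> (j <= d)%N -> (k <= d)%N ->
        (k < maxn i j - minn i j)%N -> te i *m tas ^+ k *m te j = 0)].

Definition T_irreducible (d : nat)
    (ta : 'M[F]_n) (te : nat -> 'M[F]_n) (tas : 'M[F]_n) (tes : nat -> 'M[F]_n) :=
  (0 < n)%N /\
  forall W : 'M[F]_n,
    (W *m ta <= W)%MS -> (W *m tas <= W)%MS ->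
    (forall i, (i <= d)%N -> (W *m te i <= W)%MS) ->
    (forall i, (i <= d)%N -> (W *m tes i <= W)%MS) ->
    (W == (0 : 'M[F]_n))%MS || (W == 1%:M)%MS.

End Defs.

(* Main.v *)
From HB Require Import structures.
From mathcomp Require Import all_boot all_order all_algebra.
From mathcomp Require Import zify.
Require Import Defs.
Set Implicit Arguments. Unset Strict Implicit. Unset Printing Implicit Defensive.
Import Order.TTheory GRing.Theory Num.Theory.
Local Open Scope ring_scope.

Section H.
Variables (F : fieldType) (n : nat).
Implicit Types (M N X : 'M[F]_n).

Lemma ext_span (S : nat -> 'M[F]_n) m M N :
  (\sum_(0 <= k < m.+1) S k == 1%:M)%MS ->
  (forall k, (k <= m)%N -> S k *m M = S k *m N) -> M = N.
Proof.
move=> /andP[_ H1] HS.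
have : (1%:M <= kermx (M - N))%MS.
  apply: submx_trans H1 _.
  rewrite big_seq.
  apply: (big_ind (fun X : 'M[F]_n => X <= kermx (M - N))%MS).
  - exact: sub0mx.
  - by move=> x y hx hy; rewrite addsmx_sub hx hy.
  - move=> k; rewrite mem_index_iota => /andP[_ hk].
    by rewrite sub_kermx mulmxBr HS ?subrr.
by rewrite sub_kermx mul1mx subr_eq0 => /eqP.
Qed.

Lemma sum_pick (m d : nat) X : (m <= d)%N ->
  \sum_(0 <= i < d.+1) (if i == m then X else 0) = X.
Proof.
move=> hm; rewrite (bigD1_seq m) /=.
- by rewrite eqxx big1 ?addr0 // => i /negbTE ->.
- by rewrite mem_index_iota ltnS hm.
- exact: (iota_uniq 0 d.+1).
Qed.

Lemma tri (E : nat -> 'M[F]_n) (B : 'M[F]_n) delta :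
 (forall i j, (i <= delta)%N -> (j <= delta)%N ->
    E i *m E j = if i == j then E i else 0) ->
 (forall i, (i <= delta)%N ->
    (E i *m B <= \sum_(0 <= j < delta.+1 | (i <= j.+1)%N && (j <= i.+1)%N) E j)%MS) ->
 forall k i j, (i <= delta)%N -> (j <= delta)%N -> (k < maxn i j - minn i j)%N ->
   E i *m B ^+ k *m E j = 0.
Proof.
move=> HE HB; elim=> [|k IH] i j hi hj hk.
  rewrite expr0 -idmxE mulmx1 HE //.
  by have -> : (i == j) = false by apply/negbTE/eqP => eij; subst; lia.
rewrite exprS -mulmxE mulmxA -mulmxA.
apply/eqP; rewrite -sub_kermx; apply: submx_trans (HB i hi) _.
rewrite big_seq_cond.
apply: (big_ind (fun X : 'M[F]_n => X <= kermx (B ^+ k *m E j))%MS).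
- exact: sub0mx.
- by move=> x y hx hy; rewrite addsmx_sub hx hy.
- move=> l; rewrite mem_index_iota => /andP[/andP[_ hl] /andP[h1 h2]].
  rewrite sub_kermx mulmxA IH //; lia.
Qed.

Lemma idem_of delta A (E : nat -> 'M[F]_n) th : prim_idems delta A E th ->
  forall i j, (i <= delta)%N -> (j <= delta)%N ->
    E i *m E j = if i == j then E i else 0.
Proof.
case=> _ _ hs hp i j hi hj.
apply: (ext_span (S := fun k => eigenspace A (th k))) hs _ => k hk.
rewrite /= mulmxA hp //.
case: (eqVneq i k) => [<-|nik].
  case: (eqVneq i j) => [<-|nij]; first by [].
  by rewrite mulmx0 hp // eq_sym (negbTE nij).
by rewrite mul0mx; case: (i == j); rewrite ?mulmx0 // hp // (negbTE nik).
Qed.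

Lemma shift_all delta d t A (E : nat -> 'M[F]_n) th :
  (delta <= d)%N -> (t <= d - delta)%N ->
  prim_idems delta A E (fun j => th (t + j)%N) ->
  let te := fun i => if (t <= i)%N && (i <= t + delta)%N then E (i - t)%N else 0 in
  [/\ forall i j, (i <= d)%N -> (j <= d)%N ->
        te i *m te j = if i == j then te i else 0,
      \sum_(0 <= i < d.+1) te i = 1%:M &
      A = \sum_(0 <= i < d.+1) th i *: te i].
Proof.
move=> hd ht hP te.
have hI := idem_of hP.
case: hP => _ _ hs hp.
pose S k := eigenspace A (th (t + k)%N).
have hSte : forall k i, (k <= delta)%N -> S k *m te i = if i == (t + k)%N then S k else 0.
  move=> k i hk; rewrite /te /S; case: ifP => h.
    rewrite (hp (i - t)%N k) //; last by lia.
    by have -> : (i - t == k)%N = (i == t + k)%N by apply/idP/idP => /eqP e; apply/eqP; lia.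
  rewrite mulmx0; case: eqP => // e; lia.
split.
- move=> i j hi hj; rewrite /te.
  case hi': ((t <= i)%N && (i <= t + delta)%N);
  case hj': ((t <= j)%N && (j <= t + delta)%N); rewrite ?mul0mx ?mulmx0 ?if_same //.
  + rewrite hI; try lia.
    by have -> : (i - t == j - t)%N = (i == j)%N by apply/idP/idP => /eqP e; apply/eqP; lia.
  + by case: eqP => // e; subst; rewrite hi' in hj'.
- apply: (ext_span (S := S)) hs _ => k hk.
  rewrite mulmx1 mulmx_sumr (eq_bigr (fun i => if i == (t + k)%N then S k else 0)).
    by rewrite sum_pick //; lia.
  by move=> i _; rewrite hSte.
- apply: (ext_span (S := S)) hs _ => k hk.
  have /eigenspaceP -> : (S k <= S k)%MS by [].
  rewrite mulmx_sumr (eq_bigr (fun i => if i == (t + k)%N then th (t + k)%N *: S k else 0)).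
    by rewrite sum_pick //; lia.
  move=> i _; rewrite -scalemxAr hSte //.
  by case: eqP => [->|]; rewrite ?scaler0.
Qed.

Lemma shift_tri delta t (E : nat -> 'M[F]_n) (B : 'M[F]_n) :
 (forall i j, (i <= delta)%N -> (j <= delta)%N ->
    E i *m E j = if i == j then E i else 0) ->
 (forall i, (i <= delta)%N ->
    (E i *m B <= \sum_(0 <= j < delta.+1 | (i <= j.+1)%N && (j <= i.+1)%N) E j)%MS) ->
  let te := fun i => if (t <= i)%N && (i <= t + delta)%N then E (i - t)%N else 0 in
  forall i j k, (k < maxn i j - minn i j)%N -> te i *m B ^+ k *m te j = 0.
Proof.
move=> HE HB te i j k hk; rewrite /te.
case hi': ((t <= i)%N && (i <= t + delta)%N);
case hj': ((t <= j)%N && (j <= t + delta)%N); rewrite ?mul0mx ?mulmx0 //.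
apply: (tri HE HB); lia.
Qed.
End H.

Unset Implicit Arguments.
Theorem proposition5p5 (F : fieldType) (d : nat) (th ths : nat -> F)
  (delta r t n : nat) (A As : 'M[F]_n) (E Es : nat -> 'M[F]_n) :
  scalars_ok d th ths ->
  (delta <= d)%N -> (r <= d - delta)%N -> (t <= d - delta)%N ->
  TD_system delta A E As Es (fun j => th (t + j)%N) (fun j => ths (r + j)%N) ->
  exists (ta : 'M[F]_n) (te : nat -> 'M[F]_n) (tas : 'M[F]_n) (tes : nat -> 'M[F]_n),
    [/\ T_module d th ths ta te tas tes,
        ta = A /\ tas = As,
        forall i, (i <= d)%N ->
          te i = if (t <= i)%N && (i <= t + delta)%N then E (i - t)%N else 0,
        forall i, (i <= d)%N ->
          tes i = if (r <= i)%N && (i <= r + delta)%N then Es (i - r)%N else 0 &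
        T_irreducible d ta te tas tes].
Proof.
move=> _ hd hr ht [hn [hP hPs] hEAs hEsA hirr].
have [h1 h2 h3] := shift_all hd ht hP.
have [h1s h2s h3s] := shift_all hd hr hPs.
have hT1 := shift_tri t (idem_of hP) hEAs.
have hT2 := shift_tri r (idem_of hPs) hEsA.
exists A, (fun i => if (t <= i)%N && (i <= t + delta)%N then E (i - t)%N else 0), As,
  (fun i => if (r <= i)%N && (i <= r + delta)%N then Es (i - r)%N else 0); split.
- split; [split; [exact: h1 | exact: h1s] | split; [exact: h2 | exact: h2s]
         | split; [exact: h3 | exact: h3s] | | ].
  + by move=> i j k _ _ _; apply: hT2.
  + by move=> i j k _ _ _; apply: hT1.
- by split.
- by move=> i _.
- by move=> i _.
- by split=> // W hA hAs _ _; apply: hirr.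
Qed.
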